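(* Let $\kappa > 0$ and let $(X,d)$ be a compact CAT$(\kappa)$ space such that $d(v,w) < \pi/(2\sqrt{\kappa})$ for all $v,w \in X$. Let $N \ge 1$ and let $f = \sum_{i=1}^N f_i$, where each $f_i : X \to (-\infty,\infty]$ is proper, convex and lower semi-continuous, and suppose $f$ attains its minimum. Let $x_0 \in X$ and let $(\lambda_j)_{j\ge0}$ be a sequence of positive real numbers with $\sum_{j \ge 0}\lambda_j = \infty$ and $\sum_{j\ge 0}\lambda_j^2 < \infty$. Define $(x_n)$ by \[ x_{jN+i} = J^i_{\lambda_j}(x_{jN+i-1}), \qquad j \ge 0,\ i \in \{1,\ldots,N\}, \] where $J^i_\lambda(x) = \operatorname{argmin}_{y\in X}\left[f_i(y) + \frac{1}{\lambda}\Psi_x(y)\right]$. Suppose there exists $L > 0$ such that for every $j \in \mathbb{N}$ and $i \in \{1,\ldots,N\}$, \[ f_i(x_{jN}) - f_i(x_{jN+i}) \le L\, d(x_{jN},x_{jN+i}) \quad\text{and}\quad f_i(x_{jN+i-1}) - f_i(x_{jN+i}) \le L\, d(x_{jN+i-1},x_{jN+i}). \] Then $(x_n)$ converges to a minimum point of $f$.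
   Context: A CAT$(\kappa)$ space ($\kappa>0$) is a metric space in which any two points at distance $<\pi/\sqrt{\kappa}$ are joined by a geodesic and every geodesic triangle of perimeter $<2\pi/\sqrt{\kappa}$ satisfies the CAT$(\kappa)$ comparison inequality with respect to its comparison triangle in the sphere of constant curvature $\kappa$. Writing $(1-t)x+ty$ for the point at distance $t\,d(x,y)$ from $x$ on the geodesic from $x$ to $y$, a function $g$ is convex if $g((1-t)x+ty) \le (1-t)g(x)+tg(y)$ for all $x,y$, $t\in[0,1]$; proper means not identically $\infty$. For $x \in X$, $\Psi_x : X \to [0,\infty)$ is $\Psi_x(y) = \frac{1}{\kappa\cos(\sqrt{\kappa}\,d(y,x))} - \frac{\cos(\sqrt{\kappa}\,d(y,x))}{\kappa}$; for each proper convex lower semi-continuous $g$ and $\lambda>0$ the minimizer $\operatorname{argmin}_{y\in X}[g(y)+\frac1\lambda\Psi_x(y)]$ exists and is unique under the stated assumptions, so the $J^i_\lambda$ are well-defined maps $X\to X$. *)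

(* Defs.v *)
From Stdlib Require Import Reals Lra List.
From Coquelicot Require Import Coquelicot.
Open Scope R_scope.

Definition is_metric {X : Type} (d : X -> X -> R) : Prop :=
  (forall x y, 0 <= d x y) /\
  (forall x y, d x y = 0 <-> x = y) /\
  (forall x y, d x y = d y x) /\
  (forall x y z, d x z <= d x y + d y z).

Definition m_open {X : Type} (d : X -> X -> R) (U : X -> Prop) : Prop :=
  forall x, U x -> exists e, 0 < e /\ forall y, d x y < e -> U y.

Definition m_compact {X : Type} (d : X -> X -> R) : Prop :=
  forall (I : Type) (U : I -> X -> Prop),
    (forall i, m_open d (U i)) -> (forall x, exists i, U i x) ->
    exists l : list I, forall x, exists i, In i l /\ U i x.

Definition geodesic {X : Type} (d : X -> X -> R) (x y : X) (g : R -> X) : Prop :=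
  g 0 = x /\ g (d x y) = y /\
  forall s t, 0 <= s <= d x y -> 0 <= t <= d x y -> d (g s) (g t) = Rabs (s - t).

(** The model sphere M^2_kappa: unit vectors of R^3 with distance
    acos(<u,v>)/sqrt kappa. *)
Definition pt3 := (R * R * R)%type.
Definition dot3 (u v : pt3) : R :=
  let '(u1, u2, u3) := u in let '(v1, v2, v3) := v in u1 * v1 + u2 * v2 + u3 * v3.
Definition on_sphere (u : pt3) : Prop := dot3 u u = 1.
Definition dsph (kappa : R) (u v : pt3) : R := acos (dot3 u v) / sqrt kappa.

(** [P] is the comparison point in the model sphere of the point at distance s
    from the start on a side of length l with comparison endpoints A, B. *)
Definition cmp_point (kappa : R) (A B : pt3) (l s : R) (P : pt3) : Prop :=
  on_sphere P /\ dsph kappa A P = s /\ dsph kappa P B = l - s.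

(** A point of a geodesic triangle, given as a side (start a, end b, geodesic g,
    comparison endpoints A B) and a parameter s. *)
Record side {X : Type} := mkSide { s_a : X; s_b : X; s_g : R -> X; s_A : pt3; s_B : pt3 }.
Arguments side : clear implicits.

Definition CAT_space {X : Type} (kappa : R) (d : X -> X -> R) : Prop :=
  is_metric d /\
  (forall x y, d x y < PI / sqrt kappa -> exists g, geodesic d x y g) /\
  (forall (p q r : X) (gpq gqr grp : R -> X) (P Q Rr : pt3),
     geodesic d p q gpq -> geodesic d q r gqr -> geodesic d r p grp ->
     d p q + d q r + d r p < 2 * PI / sqrt kappa ->
     on_sphere P -> on_sphere Q -> on_sphere Rr ->
     dsph kappa P Q = d p q -> dsph kappa Q Rr = d q r -> dsph kappa Rr P = d r p ->
     let sides := mkSide X p q gpq P Q :: mkSide X q r gqr Q Rr :: mkSide X r p grp Rr P :: nil in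
     forall S1 S2 s1 s2 C1 C2,
       In S1 sides -> In S2 sides ->
       0 <= s1 <= d (s_a S1) (s_b S1) -> 0 <= s2 <= d (s_a S2) (s_b S2) ->
       cmp_point kappa (s_A S1) (s_B S1) (d (s_a S1) (s_b S1)) s1 C1 ->
       cmp_point kappa (s_A S2) (s_B S2) (d (s_a S2) (s_b S2)) s2 C2 ->
       d (s_g S1 s1) (s_g S2 s2) <= dsph kappa C1 C2).

(** Functions X -> (-oo, +oo], as Rbar-valued functions never equal to -oo. *)
Definition ext_valued {X : Type} (g : X -> Rbar) : Prop :=
  forall x, g x <> m_infty.

Definition proper_fun {X : Type} (g : X -> Rbar) : Prop :=
  exists x, g x <> p_infty.

Definition convex_fun {X : Type} (d : X -> X -> R) (g : X -> Rbar) : Prop :=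
  forall x y gam, geodesic d x y gam -> forall t, 0 <= t <= 1 ->
    Rbar_le (g (gam (t * d x y)))
            (Rbar_plus (Rbar_mult (1 - t) (g x)) (Rbar_mult t (g y))).

Definition lsc {X : Type} (d : X -> X -> R) (g : X -> Rbar) : Prop :=
  forall x (a : R), Rbar_lt a (g x) ->
    exists e, 0 < e /\ forall y, d x y < e -> Rbar_lt a (g y).

Definition Psi {X : Type} (kappa : R) (d : X -> X -> R) (x y : X) : R :=
  1 / (kappa * cos (sqrt kappa * d y x)) - cos (sqrt kappa * d y x) / kappa.

Definition is_resolvent {X : Type} (kappa : R) (d : X -> X -> R)
    (g : X -> Rbar) (lambda : R) (x z : X) : Prop :=
  forall y, Rbar_le (Rbar_plus (g z) (Finite (Psi kappa d x z / lambda)))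
                    (Rbar_plus (g y) (Finite (Psi kappa d x y / lambda))).

Fixpoint sumF {X : Type} (f : nat -> X -> Rbar) (N : nat) (y : X) : Rbar :=
  match N with
  | O => Finite 0
  | S n => Rbar_plus (sumF f n y) (f (S n) y)
  end.

Definition is_minimizer {X : Type} (F : X -> Rbar) (z : X) : Prop :=
  forall y, Rbar_le (F z) (F y).

Definition converges_to {X : Type} (d : X -> X -> R) (u : nat -> X) (p : X) : Prop :=
  forall e, 0 < e -> exists M, forall n, (M <= n)%nat -> d (u n) p < e.

(* Main.v *)
Require Import Defs.
From Stdlib Require Import Reals Lra List Classical Lia Arith ClassicalEpsilon.
From Coquelicot Require Import Coquelicot.
Open Scope R_scope.

Lemma cont_of_derive f x l : is_derive f x l -> continuity_pt f x.
Proof.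
  intro H. apply is_derive_Reals in H.
  apply derivable_continuous_pt. exists l. exact H.
Qed.

Lemma tcos_le t : 0 <= t <= PI -> t * cos t - sin t <= 0.
Proof.
  intros Ht.
  set (g := fun u => u * cos u - sin u).
  assert (Hd : forall u, is_derive g u (- (u * sin u))).
  { intro u. unfold g. auto_derive; auto. ring. }
  destruct (MVT_gen g 0 t (fun u => - (u * sin u))) as [c [Hc Hgc]].
  - intros; apply Hd.
  - intros; eapply cont_of_derive; apply Hd.
  - rewrite Rmin_left in Hc by lra. rewrite Rmax_right in Hc by lra.
    unfold g in Hgc. rewrite sin_0, cos_0 in Hgc.
    assert (0 <= sin c) by (apply sin_ge_0; lra).
    assert (0 <= c * sin c) by (apply Rmult_le_pos; lra).
    assert (0 <= c * sin c * t) by (apply Rmult_le_pos; lra).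
    nra.
Qed.

Lemma sinc_decr p q : 0 <= p -> p <= q -> q <= PI -> p * sin q <= q * sin p.
Proof.
  intros Hp Hpq Hq.
  destruct (Req_dec p 0) as [->|Hp0].
  { assert (0 <= sin 0) by (rewrite sin_0; lra). nra. }
  set (g := fun u => sin u / u).
  assert (Hd : forall u, 0 < u -> is_derive g u ((u * cos u - sin u) / (u*u))).
  { intros u Hu. unfold g. auto_derive. lra. field. lra. }
  destruct (MVT_gen g p q (fun u => (u * cos u - sin u) / (u*u))) as [c [Hc Hgc]].
  - intros u Hu. apply Hd. rewrite Rmin_left in Hu by lra. lra.
  - intros u Hu. eapply cont_of_derive. apply Hd. rewrite Rmin_left in Hu by lra. lra.
  - rewrite Rmin_left in Hc by lra. rewrite Rmax_right in Hc by lra.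
    unfold g in Hgc.
    assert (Hc0 : 0 < c) by lra.
    assert (H1 : c * cos c - sin c <= 0) by (apply tcos_le; lra).
    assert (H2 : (c * cos c - sin c) / (c*c) <= 0).
    { unfold Rdiv. apply Rmult_le_0_r. lra. left. apply Rinv_0_lt_compat. nra. }
    assert (H3 : sin q / q - sin p / p <= 0).
    { rewrite Hgc. apply Rmult_le_0_r; lra. }
    assert (Hq0 : 0 < q) by lra.
    assert (sin q / q * (p*q) - sin p / p * (p*q) <= 0).
    { assert (0 < p*q) by nra. nra. }
    replace (sin q / q * (p*q)) with (p * sin q) in H by (field; lra).
    replace (sin p / p * (p*q)) with (q * sin p) in H by (field; lra).
    lra.
Qed.

Lemma lemS r s : 0 <= r <= PI/2 -> 0 <= s <= PI/2 ->
  r * (cos r - cos s) <= sin r * (s*s - r*r) / 2.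
Proof.
  intros Hr Hs.
  set (g := fun u => sin r * (u*u) / 2 + r * cos u).
  assert (Hd : forall u, is_derive g u (sin r * u - r * sin u)).
  { intro u. unfold g. auto_derive; auto. field. }
  destruct (MVT_gen g r s (fun u => sin r * u - r * sin u)) as [c [Hc Hgc]].
  - intros; apply Hd.
  - intros; eapply cont_of_derive; apply Hd.
  - unfold g in Hgc.
    assert (0 <= (sin r * c - r * sin c) * (s - r)).
    { destruct (Rle_dec r s).
      + rewrite Rmin_left in Hc by lra. rewrite Rmax_right in Hc by lra.
        pose proof (sinc_decr r c ltac:(lra) ltac:(lra) ltac:(lra)).
        apply Rmult_le_pos; lra.
      + rewrite Rmin_right in Hc by lra. rewrite Rmax_left in Hc by lra.
        pose proof (sinc_decr c r ltac:(lra) ltac:(lra) ltac:(lra)).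
        assert (sin r * c - r * sin c <= 0) by lra.
        assert (s - r <= 0) by lra. nra. }
    lra.
Qed.

Lemma sin_ge_half t : 0 <= t <= PI/2 -> t / 2 <= sin t.
Proof.
  intros Ht. pose proof (sinc_decr t (PI/2) ltac:(lra) ltac:(lra) ltac:(lra)).
  rewrite sin_PI2 in H. pose proof PI_4. assert (0 <= sin t) by (apply sin_ge_0; lra). nra.
Qed.

Lemma deriv_bound (H : R -> R) (A G : R) :
  derivable_pt_lim H 0 G -> (forall t, 0 < t <= 1 -> t * A <= H t - H 0) -> A <= G.
Proof.
  intros HD Hle. destruct (Rle_dec A G) as [|Hn]; auto. exfalso.
  assert (He : 0 < (A - G)/2) by lra.
  destruct (HD _ He) as [del Hdel].
  set (t := Rmin (del/2) 1).
  assert (Ht0 : 0 < t). { unfold t. apply Rmin_pos. pose proof (cond_pos del); lra. lra. }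
  assert (Ht1 : t <= 1) by apply Rmin_r.
  assert (Ht2 : t <= del/2) by apply Rmin_l.
  specialize (Hdel t ltac:(lra)).
  assert (Rabs t < del) by (rewrite Rabs_right; pose proof (cond_pos del); lra).
  specialize (Hdel H0). rewrite Rplus_0_l in Hdel.
  specialize (Hle t ltac:(lra)).
  apply Rabs_def2 in Hdel. destruct Hdel as [Hd1 Hd2].
  assert (A <= (H t - H 0) / t).
  { apply Rmult_le_reg_r with t; auto. unfold Rdiv. rewrite Rmult_assoc, Rinv_l; lra. }
  lra.
Qed.

Lemma step_real (X del phi theta rho : R) :
  0 < del -> del <= cos phi -> 0 <= phi -> phi <= PI/2 ->
  0 < theta -> theta <= PI/2 -> 0 <= rho -> rho <= PI/2 ->
  X <= (1 + 1 / (cos phi)^2) * (theta / sin theta) * (cos phi * cos theta - cos rho) ->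
  X <= rho^2 - theta^2 + 2 * phi^2 / del^2.
Proof.
  intros Hd HdD Hp0 Hp1 Ht0 Ht1 Hr0 Hr1 HX.
  set (D := cos phi) in *.
  assert (HD1 : D <= 1) by (apply COS_bound).
  assert (Hs : 0 < sin theta) by (apply sin_gt_0; pose proof PI_RGT_0; lra).
  assert (Hct : 0 <= cos theta) by (apply cos_ge_0; lra).
  set (w := theta / sin theta). change (theta / sin theta) with w in HX.
  assert (Hw : 0 < w) by (unfold w; apply Rdiv_lt_0_compat; lra).
  set (Phi := w * (cos theta - cos rho)).
  assert (HPhi : Phi <= (rho^2 - theta^2)/2).
  { pose proof (lemS theta rho ltac:(lra) ltac:(lra)).
    unfold Phi, w.
    apply Rmult_le_reg_l with (sin theta); auto.
    replace (sin theta * (theta / sin theta * (cos theta - cos rho))) with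
      (theta * (cos theta - cos rho)) by (field; lra).
    nra. }
  assert (HPhi2 : Phi <= 2). { pose proof PI_4. nra. }
  set (iD := 1 / D^2).
  assert (HiD : 1 <= iD).
  { assert (HD2 : 0 < D^2 <= 1) by nra.
    assert (iD * D^2 = 1) by (unfold iD; field; lra). nra. }
  assert (Hq : D * cos theta - cos rho <= cos theta - cos rho) by nra.
  assert (Herr : (iD - 1) <= phi^2 / del^2).
  { assert (Hsp : sin phi <= phi).
    { destruct (Req_dec phi 0) as [->|]. rewrite sin_0; lra. left; apply sin_lt_x; lra. }
    assert (Hsp0 : 0 <= sin phi) by (apply sin_ge_0; pose proof PI_RGT_0; lra).
    assert (E1 : iD - 1 = (sin phi)^2 / D^2).
    { assert (Hs2 : sin phi ^2 = 1 - D^2) by (unfold D; pose proof (sin2 phi); unfold Rsqr in *; nra).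
      rewrite Hs2. unfold iD. field. lra. }
    rewrite E1. unfold Rdiv.
    apply Rmult_le_compat. nra. left; apply Rinv_0_lt_compat; nra. nra.
    apply Rinv_le_contravar; nra. }
  destruct (Rle_dec (D * cos theta - cos rho) 0).
  - assert ((1 + iD) * w * (D * cos theta - cos rho) <= 2 * w * (D * cos theta - cos rho)).
    { assert (0 <= (iD - 1) * w * (- (D * cos theta - cos rho))).
      { apply Rmult_le_pos; [apply Rmult_le_pos; lra | lra]. } nra. }
    assert (2 * w * (D * cos theta - cos rho) <= 2 * Phi) by (unfold Phi; nra).
    assert (0 <= 2 * phi^2 / del^2). { unfold Rdiv. apply Rmult_le_pos. nra. left; apply Rinv_0_lt_compat; nra. }
    fold iD in HX. lra.
  - assert ((1 + iD) * w * (D * cos theta - cos rho) <= (1 + iD) * Phi).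
    { unfold Phi. assert (0 <= (1+iD)*w) by nra. nra. }
    assert (0 <= Phi) by (unfold Phi; nra).
    assert ((iD - 1) * Phi <= phi^2/del^2 * 2).
    { apply Rmult_le_compat; lra. }
    fold iD in HX. lra.
Qed.

Lemma diam_bound {X} (d : X -> X -> R) kappa :
  0 < kappa -> (forall v w, d v w < PI / (2 * sqrt kappa)) ->
  forall v w, sqrt kappa * d v w < PI / 2.
Proof.
  intros Hk Hd v w. pose proof (sqrt_lt_R0 _ Hk). specialize (Hd v w).
  apply Rmult_lt_compat_l with (r := sqrt kappa) in Hd; auto.
  replace (sqrt kappa * (PI / (2 * sqrt kappa))) with (PI/2) in Hd by (field; lra). exact Hd.
Qed.

Lemma acos_cos_div a dd : 0 < a -> 0 <= a * dd <= PI -> acos (cos (a * dd)) / a = dd.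
Proof. intros. rewrite acos_cos by lra. field. lra. Qed.

Lemma geo {X} (d : X -> X -> R) kappa :
  0 < kappa -> CAT_space kappa d -> (forall v w, d v w < PI / (2 * sqrt kappa)) ->
  forall x z y g, geodesic d z y g -> 0 < d z y -> forall t, 0 <= t <= 1 ->
  sin (sqrt kappa * d z y) * cos (sqrt kappa * d (g (t * d z y)) x) >=
  sin ((1 - t) * (sqrt kappa * d z y)) * cos (sqrt kappa * d z x) +
  sin (t * (sqrt kappa * d z y)) * cos (sqrt kappa * d y x).
Proof.
  intros Hk Hcat Hdiam x z y g Hg Hzy t Ht.
  pose proof (diam_bound d kappa Hk Hdiam) as Hdb.
  destruct Hcat as [[Hd0 [Hdeq [Hsym Htri]]] [Hgeo Hcmp]].
  set (a := sqrt kappa) in *.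
  assert (Ha : 0 < a) by (apply sqrt_lt_R0; auto).
  assert (Hpi := PI_RGT_0).
  assert (Hex : forall v w, exists gg, geodesic d v w gg).
  { intros v w. apply Hgeo. specialize (Hdb v w).
    apply Rmult_lt_reg_l with a; auto. replace (a * (PI / a)) with PI by (field; lra). lra. }
  destruct (Hex y x) as [gqr Hgqr]. destruct (Hex x z) as [grp Hgrp].
  set (al := a * d z y). set (be := a * d y x). set (ga := a * d x z).
  assert (Hal : 0 < al < PI/2). { split. unfold al; apply Rmult_lt_0_compat; auto. apply Hdb. }
  assert (Hbe : 0 <= be < PI/2). { split. unfold be; apply Rmult_le_pos; auto; lra. apply Hdb. }
  assert (Hga : 0 <= ga < PI/2). { split. unfold ga; apply Rmult_le_pos; auto; lra. apply Hdb. }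
  assert (T1 : be <= al + ga).
  { assert (d y x <= d z y + d x z).
    { pose proof (Htri y z x). rewrite (Hsym y z), (Hsym z x) in H. lra. }
    unfold al, be, ga. nra. }
  assert (T2 : al <= be + ga).
  { assert (d z y <= d y x + d x z).
    { pose proof (Htri z x y). rewrite (Hsym z x), (Hsym x y) in H. lra. }
    unfold al, be, ga. nra. }
  assert (T3 : ga <= al + be).
  { assert (d x z <= d z y + d y x).
    { pose proof (Htri x y z). rewrite (Hsym x y), (Hsym y z) in H. lra. }
    unfold al, be, ga. nra. }
  assert (Hsa : 0 < sin al) by (apply sin_gt_0; lra).
  assert (Hsg : 0 <= sin ga) by (apply sin_ge_0; lra).
  set (c := cos ga).
  set (u := (cos be - cos al * c) / sin al).
  assert (Hb1 : cos be - cos al * c <= sin al * sin ga).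
  { assert (cos be <= cos (al - ga)).
    { destruct (Rle_dec ga al).
      - apply cos_decr_1; lra.
      - replace (al - ga) with (- (ga - al)) by ring. rewrite cos_neg. apply cos_decr_1; lra. }
    rewrite cos_minus in H. unfold c. lra. }
  assert (Hb2 : - (sin al * sin ga) <= cos be - cos al * c).
  { assert (cos (al + ga) <= cos be) by (apply cos_decr_1; lra).
    rewrite cos_plus in H. unfold c. lra. }
  assert (Hu2 : u^2 <= 1 - c^2).
  { assert (E : 1 - c^2 = sin ga ^2) by (unfold c; pose proof (sin2 ga); unfold Rsqr in *; nra).
    rewrite E. unfold u.
    assert (Hq : (cos be - cos al * c)^2 <= (sin al * sin ga)^2) by nra.
    unfold Rdiv. rewrite Rpow_mult_distr. rewrite pow_inv.
    apply Rmult_le_reg_r with (sin al ^2). nra.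
    rewrite Rmult_assoc, Rinv_l by nra. nra. }
  set (v := sqrt (1 - c^2 - u^2)).
  assert (Hv2 : v^2 = 1 - c^2 - u^2) by (unfold v; apply pow2_sqrt; lra).
  set (P := (1, 0, 0) : pt3). set (Q := (cos al, sin al, 0) : pt3).
  set (Rr := (c, u, v) : pt3).
  set (sg := t * al).
  set (C1 := (cos sg, sin sg, 0) : pt3).
  assert (Hsph : forall th, on_sphere ((cos th, sin th, 0) : pt3)).
  { intro th. unfold on_sphere, dot3. pose proof (sin2 th). unfold Rsqr in *. lra. }
  assert (HR : on_sphere Rr) by (unfold on_sphere, Rr, dot3; lra).
  assert (HP : on_sphere P) by (unfold on_sphere, P, dot3; lra).
  assert (HQ : on_sphere Q) by apply Hsph.
  assert (HC1 : on_sphere C1) by apply Hsph.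
  assert (HPQ : dsph kappa P Q = d z y).
  { unfold dsph, P, Q, dot3; change (sqrt kappa) with a. replace (1 * cos al + 0 * sin al + 0 * 0) with (cos (a * d z y)) by (unfold al; ring).
    apply acos_cos_div; auto. fold al. lra. }
  assert (HQR : dsph kappa Q Rr = d y x).
  { unfold dsph, Q, Rr, dot3; change (sqrt kappa) with a. replace (cos al * c + sin al * u + 0 * v) with (cos (a * d y x)).
    apply acos_cos_div; auto. fold be. lra.
    fold be. unfold u. field. lra. }
  assert (HRP : dsph kappa Rr P = d x z).
  { unfold dsph, Rr, P, dot3; change (sqrt kappa) with a. replace (c * 1 + u * 0 + v * 0) with (cos (a * d x z)) by (unfold c, ga; ring).
    apply acos_cos_div; auto. fold ga. lra. }
  assert (Hper : d z y + d y x + d x z < 2 * PI / sqrt kappa).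
  { fold a. apply Rmult_lt_reg_l with a; auto.
    replace (a * (2 * PI / a)) with (2 * PI) by (field; lra).
    replace (a * (d z y + d y x + d x z)) with (al + be + ga) by (unfold al, be, ga; ring). lra. }
  assert (Hsl : 0 <= t * d z y <= d z y) by nra.
  assert (HC1c : cmp_point kappa P Q (d z y) (t * d z y) C1).
  { split; auto. split.
    - unfold dsph, P, C1, dot3; change (sqrt kappa) with a. replace (1 * cos sg + 0 * sin sg + 0 * 0) with (cos (a * (t * d z y))) by (unfold sg, al; ring_simplify; f_equal; ring).
      apply acos_cos_div; auto. unfold al in Hal. nra.
    - unfold dsph, C1, Q, dot3; change (sqrt kappa) with a.
      replace (cos sg * cos al + sin sg * sin al + 0 * 0) with (cos (a * (d z y - t * d z y))).
      apply acos_cos_div; auto. unfold al in Hal. nra.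
      replace (a * (d z y - t * d z y)) with (al - sg) by (unfold sg, al; ring). rewrite cos_minus. ring. }
  assert (HC2c : cmp_point kappa Rr P (d x z) 0 Rr).
  { split; auto. split.
    - unfold dsph. unfold on_sphere in HR. rewrite HR, acos_1. lra.
    - rewrite HRP. ring. }
  destruct Hg as [Hg0 [Hg1 Hg2]]. destruct Hgrp as [Hr0 [Hr1 Hr2]].
  pose proof (Hcmp z y x g gqr grp P Q Rr (conj Hg0 (conj Hg1 Hg2)) Hgqr (conj Hr0 (conj Hr1 Hr2)) Hper HP HQ HR HPQ HQR HRP
     (mkSide X z y g P Q) (mkSide X x z grp Rr P) (t * d z y) 0 C1 Rr
     ltac:(simpl; auto) ltac:(simpl; auto) Hsl ltac:(simpl; split; [lra| apply Hd0]) HC1c HC2c) as Hc.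
  simpl in Hc. rewrite Hr0 in Hc.
  set (dt := cos sg * c + sin sg * u + 0 * v).
  assert (Hc' : a * d (g (t * d z y)) x <= acos dt).
  { unfold dsph in Hc. fold dt in Hc. change (sqrt kappa) with a in Hc.
    apply Rmult_le_reg_r with (/ a). apply Rinv_0_lt_compat; auto.
    replace (a * d (g (t * d z y)) x * / a) with (d (g (t * d z y)) x) by (field; lra). exact Hc. }
  assert (Hdt : -1 <= dt <= 1).
  { assert (dt^2 <= 1).
    { unfold dt. pose proof (sin2 sg). unfold Rsqr in *.
      assert (0 <= (cos sg * u - sin sg * c)^2) by apply pow2_ge_0.
      assert (Hid : (cos sg * c + sin sg * u + 0 * v)^2 + (cos sg * u - sin sg * c)^2
                    = (c^2 + u^2) * (sin sg * sin sg + cos sg * cos sg)) by ring.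
      rewrite H in Hid. lra. }
    split; nra. }
  assert (Hcd : dt <= cos (a * d (g (t * d z y)) x)).
  { rewrite <- (cos_acos dt) at 1 by lra. apply cos_decr_1.
    apply Rmult_le_pos; [lra|apply Hd0]. pose proof (Hdb (g (t * d z y)) x). lra.
    apply acos_bound. apply acos_bound. exact Hc'. }
  rewrite (Hsym z x). fold ga. fold c.
  replace ((1 - t) * al) with (al - sg) by (unfold sg; ring).
  rewrite sin_minus.
  assert (sin al * dt = (sin al * cos sg - cos al * sin sg) * c + sin sg * cos be).
  { unfold dt, u. field. lra. }
  apply Rle_ge. rewrite <- H. apply Rmult_le_compat_l; lra.
Qed.

Lemma H_deriv k D E th : 0 < D -> 0 < k -> 0 < sin th ->
  is_derive (fun t => 1 / (k * ((sin ((1-t)*th) * D + sin (t*th) * E)/ sin th)) - ((sin ((1-t)*th) * D + sin (t*th) * E)/ sin th) / k) 0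
 ((1 + 1/D^2) * (th / sin th) * (D * cos th - E) / k).
Proof.
  intros. auto_derive.
  - replace ((1 + - 0) * th) with th by ring. replace (0 * th) with 0 by ring. rewrite sin_0.
    replace ((sin th * D + 0 * E) * / sin th) with D by (field; lra). nra.
  - replace ((1 + - 0) * th) with th by ring. replace (0 * th) with 0 by ring. rewrite sin_0, cos_0.
    field. split; lra.
Qed.

Lemma h_decr k b c : 0 < k -> 0 < b -> b <= c -> 1 / (k * c) - c / k <= 1 / (k * b) - b / k.
Proof.
  intros Hk Hb Hbc.
  assert (1 / (k*c) <= 1 / (k*b)).
  { unfold Rdiv. rewrite !Rmult_1_l. apply Rinv_le_contravar; nra. }
  assert (c / k >= b / k). { unfold Rdiv. apply Rle_ge. apply Rmult_le_compat_r. left; apply Rinv_0_lt_compat; lra. lra. }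
  lra.
Qed.

Lemma res_ineq {X} (d : X -> X -> R) kappa :
  0 < kappa -> CAT_space kappa d -> (forall v w, d v w < PI / (2 * sqrt kappa)) ->
  forall (g : X -> Rbar), convex_fun d g -> forall lam, 0 < lam ->
  forall x z y (gz gy : R), g z = Finite gz -> g y = Finite gy ->
  is_resolvent kappa d g lam x z -> 0 < d z y ->
  kappa * lam * (gz - gy) <=
  (1 + 1 / (cos (sqrt kappa * d z x))^2) * ((sqrt kappa * d z y) / sin (sqrt kappa * d z y)) *
  (cos (sqrt kappa * d z x) * cos (sqrt kappa * d z y) - cos (sqrt kappa * d y x)).
Proof.
  intros Hk Hcat Hdiam g Hconv lam Hl x z y gz gy Hgz Hgy Hres Hzy.
  pose proof (diam_bound d kappa Hk Hdiam) as Hdb.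
  pose proof Hcat as Hcat'.
  destruct Hcat' as [[Hd0 [Hdeq [Hsym Htri]]] [Hgeo Hcmp]].
  set (a := sqrt kappa) in *.
  assert (Ha : 0 < a) by (apply sqrt_lt_R0; auto).
  assert (Hpi := PI_RGT_0).
  destruct (Hgeo z y) as [gam Hgam].
  { specialize (Hdb z y). apply Rmult_lt_reg_l with a; auto. replace (a * (PI / a)) with PI by (field; lra). lra. }
  set (th := a * d z y). set (D := cos (a * d z x)). set (E := cos (a * d y x)).
  assert (Hth : 0 < th < PI/2). { split. unfold th; apply Rmult_lt_0_compat; auto. apply Hdb. }
  assert (HD : 0 < D) by (apply cos_gt_0; pose proof (Hdb z x); assert (0 <= a * d z x) by (apply Rmult_le_pos; [lra|apply Hd0]); lra).
  assert (HE : 0 < E) by (apply cos_gt_0; pose proof (Hdb y x); assert (0 <= a * d y x) by (apply Rmult_le_pos; [lra|apply Hd0]); lra).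
  assert (Hs : 0 < sin th) by (apply sin_gt_0; lra).
  set (B := fun t => (sin ((1-t)*th) * D + sin (t*th) * E)/ sin th).
  set (H := fun t => 1 / (kappa * B t) - B t / kappa).
  assert (Hmin : 0 < Rmin D E) by (apply Rmin_pos; lra).
  assert (HB : forall t, 0 <= t <= 1 -> Rmin D E <= B t).
  { intros t Ht. unfold B.
    assert (S1 : 0 <= sin ((1-t)*th)) by (apply sin_ge_0; nra).
    assert (S2 : 0 <= sin (t*th)) by (apply sin_ge_0; nra).
    assert (S3 : sin th <= sin ((1-t)*th) + sin (t*th)).
    { replace th with ((1-t)*th + t*th) at 1 by ring. rewrite sin_plus.
      assert (0 <= cos (t*th) <= 1). { split. apply cos_ge_0; nra. apply COS_bound. }
      assert (0 <= cos ((1-t)*th) <= 1). { split. apply cos_ge_0; nra. apply COS_bound. }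
      nra. }
    apply Rmult_le_reg_r with (sin th); auto. unfold Rdiv. rewrite Rmult_assoc, Rinv_l by lra.
    pose proof (Rmin_l D E). pose proof (Rmin_r D E).
    assert (Rmin D E * sin ((1-t)*th) <= sin ((1-t)*th) * D) by nra.
    assert (Rmin D E * sin (t*th) <= sin (t*th) * E) by nra.
    assert (Rmin D E * sin th <= Rmin D E * (sin ((1-t)*th) + sin (t*th))) by (apply Rmult_le_compat_l; lra).
    lra. }
  assert (HB0 : B 0 = D). { unfold B. replace ((1-0)*th) with th by ring. replace (0*th) with 0 by ring.
    rewrite sin_0. field. lra. }
  assert (Hmain : forall t, 0 < t <= 1 -> t * (lam * (gz - gy)) <= H t - H 0).
  { intros t Ht.
    set (w := gam (t * d z y)).
    assert (Hgeo_w := geo d kappa Hk Hcat Hdiam x z y gam Hgam Hzy t ltac:(lra)).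
    change (sqrt kappa) with a in Hgeo_w. fold th in Hgeo_w. fold D E w in Hgeo_w.
    assert (Hcw : B t <= cos (a * d w x)).
    { unfold B. apply Rmult_le_reg_r with (sin th); auto. unfold Rdiv. rewrite Rmult_assoc, Rinv_l by lra. lra. }
    assert (HPw : Psi kappa d x w <= H t).
    { unfold Psi, H. change (sqrt kappa) with a. apply h_decr; auto. pose proof (HB t ltac:(lra)). lra. }
    assert (HPz : Psi kappa d x z = H 0).
    { unfold Psi, H. rewrite HB0. reflexivity. }
    specialize (Hres w). rewrite Hgz in Hres.
    specialize (Hconv z y gam Hgam t ltac:(lra)). fold w in Hconv. rewrite Hgz, Hgy in Hconv.
    destruct (g w) as [gw| |] eqn:Hgw; simpl in Hres, Hconv; try contradiction.
    rewrite HPz in Hres.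
    assert (Hr2 : gz + H 0 / lam <= gw + H t / lam).
    { assert (Psi kappa d x w / lam <= H t / lam) by (apply Rmult_le_compat_r; [left; apply Rinv_0_lt_compat; lra| lra]). lra. }
    assert (Hr3 : lam * (gz + H 0 / lam) <= lam * (gw + H t / lam)) by (apply Rmult_le_compat_l; lra).
    replace (lam * (gz + H 0 / lam)) with (lam * gz + H 0) in Hr3 by (field; lra).
    replace (lam * (gw + H t / lam)) with (lam * gw + H t) in Hr3 by (field; lra).
    nra. }
  assert (Hder : derivable_pt_lim H 0 ((1 + 1/D^2) * (th / sin th) * (D * cos th - E) / kappa)).
  { apply is_derive_Reals. unfold H, B. apply H_deriv; auto. }
  pose proof (deriv_bound H _ _ Hder Hmain) as Hf.
  apply Rmult_le_compat_l with (r := kappa) in Hf; [|lra].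
  replace (kappa * ((1 + 1 / D ^ 2) * (th / sin th) * (D * cos th - E) / kappa))
    with ((1 + 1 / D ^ 2) * (th / sin th) * (D * cos th - E)) in Hf by (field; lra).
  rewrite <- Rmult_assoc in Hf. exact Hf.
Qed.

Lemma list_min_pos {I : Type} (l : list I) (r : I -> R) :
  (forall i, In i l -> 0 < r i) -> exists m, 0 < m /\ forall i, In i l -> m <= r i.
Proof.
  induction l as [|a l IH]; intros H.
  - exists 1. split; [lra|]. intros i [].
  - destruct IH as [m [Hm Hm']]. { intros i Hi. apply H. right; auto. }
    exists (Rmin m (r a)). split. apply Rmin_pos; auto. apply H; left; auto.
    intros i [<-|Hi]. apply Rmin_r. eapply Rle_trans. apply Rmin_l. auto.
Qed.

Lemma list_max_nat {I : Type} (l : list I) (r : I -> nat) :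
  exists m, forall i, In i l -> (r i <= m)%nat.
Proof.
  induction l as [|a l IH].
  - exists 0%nat. intros i [].
  - destruct IH as [m Hm]. exists (Nat.max m (r a)).
    intros i [<-|Hi]. apply Nat.le_max_r. eapply Nat.le_trans. apply Hm; auto. apply Nat.le_max_l.
Qed.

Lemma ball_open {X} (d : X -> X -> R) : is_metric d -> forall c r, m_open d (fun y => d c y < r).
Proof.
  intros [Hd0 [Hdeq [Hsym Htri]]] c r y Hy. exists (r - d c y). split; [lra|].
  intros y' Hy'. pose proof (Htri c y y'). lra.
Qed.

Lemma unif_diam {X} (d : X -> X -> R) (rho : R) : is_metric d -> m_compact d ->
  (forall v w, d v w < rho) -> exists eta, 0 < eta /\ forall v w, d v w <= rho - eta.
Proof.
  intros Hm Hc Hb. pose proof Hm as [Hd0 [Hdeq [Hsym Htri]]].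
  assert (Step1 : forall v, exists eta, 0 < eta /\ forall w, d v w <= rho - eta).
  { intro v.
    destruct (Hc X (fun w y => d w y < (rho - d v w)/2)) as [l Hl].
    - intro w. apply ball_open; auto.
    - intro x. exists x. assert (d x x = 0) by (apply Hdeq; auto). specialize (Hb v x). lra.
    - destruct (list_min_pos l (fun w => (rho - d v w)/2)) as [m [Hm0 Hm1]].
      { intros i _. specialize (Hb v i). lra. }
      exists m. split; auto. intro w. destruct (Hl w) as [i [Hi Hiw]].
      specialize (Hm1 i Hi). pose proof (Htri v i w). simpl in Hm1. lra. }
  set (I := {p : X * R | 0 < snd p /\ forall w, d (fst p) w <= rho - snd p}).
  destruct (Hc I (fun p y => d (fst (proj1_sig p)) y < snd (proj1_sig p) / 2)) as [l Hl].
  - intro p. apply ball_open; auto.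
  - intro x. destruct (Step1 x) as [eta [He He']].
    exists (exist _ (x, eta) (conj He He')). simpl. assert (d x x = 0) by (apply Hdeq; auto). lra.
  - destruct (list_min_pos l (fun p => snd (proj1_sig p) / 2)) as [m [Hm0 Hm1]].
    { intros [[c e] [He He']] _. simpl in *. lra. }
    exists m. split; auto. intros v w. destruct (Hl v) as [[[c e] [He He']] [Hi Hiv]].
    specialize (Hm1 _ Hi). pose proof (He' w) as Hw. simpl in Hm1, Hiv, Hw. pose proof (Htri v c w).
    rewrite (Hsym v c) in H. lra.
Qed.

Lemma cluster {X} (d : X -> X -> R) : is_metric d -> m_compact d ->
  forall u : nat -> X, exists q, forall e, 0 < e -> forall M, exists n, (M <= n)%nat /\ d (u n) q < e.
Proof.
  intros Hm Hc u. pose proof Hm as [Hd0 [Hdeq [Hsym Htri]]].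
  apply NNPP. intro Hn.
  assert (Hq : forall q, exists e, 0 < e /\ exists M, forall n, (M <= n)%nat -> e <= d (u n) q).
  { intro q. apply NNPP. intro Hq. apply Hn. exists q. intros e He M.
    apply NNPP. intro H2. apply Hq. exists e. split; auto. exists M. intros n Hn'.
    apply Rnot_lt_le. intro H3. apply H2. exists n. auto. }
  set (I := {p : X * R * nat | 0 < snd (fst p) /\ forall n, (snd p <= n)%nat -> snd (fst p) <= d (u n) (fst (fst p))}).
  destruct (Hc I (fun p y => d (fst (fst (proj1_sig p))) y < snd (fst (proj1_sig p)))) as [l Hl].
  - intro p. apply ball_open; auto.
  - intro x. destruct (Hq x) as [e [He [M HM]]].
    exists (exist _ (x, e, M) (conj He HM)). simpl. assert (d x x = 0) by (apply Hdeq; auto). lra.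
  - destruct (list_max_nat l (fun p => snd (proj1_sig p))) as [M0 HM0].
    destruct (Hl (u M0)) as [[[[c e] M] [He HM]] [Hi Hin]].
    specialize (HM0 _ Hi). simpl in HM0, Hin. pose proof (HM M0 HM0) as HM'. simpl in HM'. rewrite Hsym in Hin. lra.
Qed.

Lemma fin_real (v : Rbar) : v <> p_infty -> v <> m_infty -> v = Finite (real v).
Proof. destruct v; simpl; congruence. Qed.

Lemma sumF_not_minf {X} (f : nat -> X -> Rbar) n y :
  (forall i, (1 <= i <= n)%nat -> f i y <> m_infty) -> sumF f n y <> m_infty.
Proof.
  induction n; intros H; simpl. discriminate.
  assert (H1 := IHn ltac:(intros; apply H; lia)).
  assert (H2 := H (S n) ltac:(lia)).
  destruct (sumF f n y); destruct (f (S n) y); simpl; congruence.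
Qed.

Lemma sumF_each_fin {X} (f : nat -> X -> Rbar) n y :
  (forall i, (1 <= i <= n)%nat -> f i y <> m_infty) -> sumF f n y <> p_infty ->
  forall i, (1 <= i <= n)%nat -> f i y <> p_infty.
Proof.
  induction n; intros H Hs i Hi. lia.
  assert (H1 := sumF_not_minf f n y ltac:(intros; apply H; lia)).
  assert (H2 := H (S n) ltac:(lia)).
  simpl in Hs.
  assert (sumF f n y <> p_infty /\ f (S n) y <> p_infty).
  { destruct (sumF f n y); destruct (f (S n) y); simpl in *; split; congruence. }
  destruct (Nat.eq_dec i (S n)) as [->|]. tauto.
  apply IHn; auto. intros; apply H; lia. tauto. lia.
Qed.

Fixpoint Fs {X} (f : nat -> X -> Rbar) (n : nat) (y : X) : R :=
  match n with O => 0 | S n => Fs f n y + real (f (S n) y) end.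

Lemma sumF_Fs {X} (f : nat -> X -> Rbar) n y :
  (forall i, (1 <= i <= n)%nat -> f i y = Finite (real (f i y))) -> sumF f n y = Finite (Fs f n y).
Proof.
  induction n; intros H; simpl. reflexivity.
  rewrite IHn by (intros; apply H; lia). rewrite (H (S n)) by lia. reflexivity.
Qed.

Lemma Rbar_lt_split (M : R) (A B : Rbar) : A <> m_infty -> B <> m_infty ->
  Rbar_lt M (Rbar_plus A B) -> exists M1 M2, M1 + M2 = M /\ Rbar_lt M1 A /\ Rbar_lt M2 B.
Proof.
  intros HA HB H. destruct A as [a| |]; destruct B as [b| |]; try congruence; simpl in H.
  - exists (a - (a + b - M)/2), (b - (a+b-M)/2). simpl. repeat split; lra.
  - exists (a - 1), (M - (a - 1)). simpl. repeat split; lra.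
  - exists (M - (b - 1)), (b - 1). simpl. repeat split; lra.
  - exists M, 0. simpl. repeat split; lra.
Qed.

Lemma Rbar_plus_lt (M1 M2 : R) (A B : Rbar) : A <> m_infty -> B <> m_infty ->
  Rbar_lt M1 A -> Rbar_lt M2 B -> Rbar_lt (M1 + M2) (Rbar_plus A B).
Proof.
  intros HA HB H1 H2. destruct A as [a| |]; destruct B as [b| |]; try congruence; simpl in *; auto. lra.
Qed.

Lemma sumF_lsc {X} (d : X -> X -> R) (f : nat -> X -> Rbar) n :
  (forall i, (1 <= i <= n)%nat -> ext_valued (f i) /\ lsc d (f i)) ->
  forall y0 (M : R), Rbar_lt M (sumF f n y0) -> exists e, 0 < e /\ forall y, d y0 y < e -> Rbar_lt M (sumF f n y).
Proof.
  induction n; intros H y0 M HM.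
  - exists 1. split. lra. intros. simpl in *. auto.
  - simpl in HM.
    assert (Hn : forall y, sumF f n y <> m_infty).
    { intro y. apply sumF_not_minf. intros i Hi. apply (H i ltac:(lia)). }
    destruct (H (S n) ltac:(lia)) as [Hev Hlsc].
    destruct (Rbar_lt_split M _ _ (Hn y0) (Hev y0) HM) as [M1 [M2 [HMe [H1 H2]]]].
    destruct (IHn ltac:(intros; apply H; lia) y0 M1 H1) as [e1 [He1 He1']].
    destruct (Hlsc y0 M2 H2) as [e2 [He2 He2']].
    exists (Rmin e1 e2). split. apply Rmin_pos; auto.
    intros y Hy. simpl. rewrite <- HMe. apply Rbar_plus_lt; auto.
    apply He1'. pose proof (Rmin_l e1 e2). lra.
    apply He2'. pose proof (Rmin_r e1 e2). lra.
Qed.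

Lemma Rbar_lt_gap (a : R) (b : Rbar) : Rbar_lt a b -> exists M : R, a < M /\ Rbar_lt M b.
Proof.
  destruct b as [b| |]; simpl; intros H; try contradiction.
  - exists ((a + b)/2). simpl. split; lra.
  - exists (a + 1). simpl. split; auto. lra.
Qed.

Lemma res_fin {X} kappa (d : X -> X -> R) (g : X -> Rbar) lam x z :
  proper_fun g -> is_resolvent kappa d g lam x z -> g z <> p_infty.
Proof.
  intros [y Hy] Hres Hz. specialize (Hres y). rewrite Hz in Hres. simpl in Hres.
  destruct (g y); simpl in Hres; congruence.
Qed.

Fixpoint ps (a : nat -> R) (n : nat) : R := match n with O => 0 | S n => ps a n + a n end.

Lemma sum_n_ps a n : sum_n a n = ps a (S n).
Proof.
  induction n. rewrite sum_O. simpl. symmetry. apply Rplus_0_l.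
  rewrite sum_Sn, IHn. reflexivity.
Qed.

Lemma ps_mono a : (forall n, 0 <= a n) -> forall m k, ps a m <= ps a (m + k).
Proof.
  intros H m k. induction k. rewrite Nat.add_0_r. lra.
  rewrite Nat.add_succ_r. simpl. specialize (H (m+k)%nat). lra.
Qed.

Lemma ps_nonneg a : (forall n, 0 <= a n) -> forall n, 0 <= ps a n.
Proof. intros H n. pose proof (ps_mono a H 0 n). simpl in H0. lra. Qed.

Lemma series_tail a : ex_series a -> (forall n, 0 <= a n) ->
  forall e, 0 < e -> exists J, forall m k, (J <= m)%nat -> ps a (m + k) - ps a m < e.
Proof.
  intros [l Hl] Ha e He.
  assert (Hlim : is_lim_seq (sum_n a) l) by exact Hl.
  apply is_lim_seq_spec in Hlim. destruct (Hlim (mkposreal (e/2) ltac:(lra))) as [J HJ]. simpl in HJ.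
  exists (S J). intros m k Hm.
  destruct m as [|m]. lia.
  pose proof (HJ m ltac:(lia)). pose proof (HJ (m + k)%nat ltac:(lia)).
  rewrite sum_n_ps in H, H0. replace (S m + k)%nat with (S (m + k)) by lia.
  apply Rabs_def2 in H. apply Rabs_def2 in H0. lra.
Qed.

Lemma series_bound a : ex_series a -> (forall n, 0 <= a n) -> exists B, forall n, ps a n <= B.
Proof.
  intros Hs Ha. destruct (series_tail a Hs Ha 1 ltac:(lra)) as [J HJ].
  exists (ps a J + 1). intro n. destruct (Compare_dec.le_lt_dec J n).
  - specialize (HJ J (n - J)%nat (le_n _)). replace (J + (n - J))%nat with n in HJ by lia. lra.
  - pose proof (ps_mono a Ha n (J - n)). replace (n + (J - n))%nat with J in H by lia. lra.
Qed.



Lemma div_tail lam : is_lim_seq (sum_n lam) p_infty ->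
  forall M m, exists k, M < ps lam (m + k) - ps lam m.
Proof.
  intros H M m. apply is_lim_seq_spec in H. destruct (H (M + ps lam m)) as [J HJ].
  exists (S J). specialize (HJ (m + J)%nat ltac:(lia)).
  rewrite sum_n_ps in HJ. replace (m + S J)%nat with (S (m + J)) by lia. lra.
Qed.

Lemma lam_to_0 lam : ex_series (fun j => lam j ^ 2) -> (forall j, 0 <= lam j) ->
  forall e, 0 < e -> exists J, forall j, (J <= j)%nat -> lam j < e.
Proof.
  intros Hs Hl e He.
  destruct (series_tail _ Hs ltac:(intros; apply pow2_ge_0) (e^2) ltac:(nra)) as [J HJ].
  exists J. intros j Hj. specialize (HJ j 1%nat Hj). rewrite Nat.add_1_r in HJ. simpl in HJ.
  specialize (Hl j). nra.
Qed.

Lemma seqA (c0 C B : R) (lam s e : nat -> R) :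
  0 < c0 -> 0 <= C -> (forall j, 0 <= s j <= B) -> (forall j, 0 <= e j) -> (forall j, 0 < lam j) ->
  (forall j, c0 * lam j * e j <= s j - s (S j) + C * lam j ^ 2) ->
  is_lim_seq (sum_n lam) p_infty -> ex_series (fun j => lam j ^ 2) ->
  forall eps, 0 < eps -> forall M, exists j, (M <= j)%nat /\ e j < eps.
Proof.
  intros Hc0 HC Hs He Hl Hrec Hdiv Hsq eps Heps M.
  apply NNPP. intro Hn.
  assert (Hge : forall j, (M <= j)%nat -> eps <= e j).
  { intros j Hj. apply Rnot_lt_le. intro. apply Hn. exists j. auto. }
  destruct (series_bound _ Hsq ltac:(intros; apply pow2_ge_0)) as [B2 HB2].
  assert (Hk : forall k, c0 * eps * (ps lam (M + k) - ps lam M) <=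
                 s M - s (M + k)%nat + C * (ps (fun j => lam j ^ 2) (M + k) - ps (fun j => lam j ^ 2) M)).
  { induction k. rewrite Nat.add_0_r. lra.
    rewrite Nat.add_succ_r. cbn [ps].
    specialize (Hrec (M + k)%nat). specialize (Hge (M + k)%nat ltac:(lia)).
    specialize (Hl (M+k)%nat).
    assert (c0 * eps * lam (M+k)%nat <= c0 * lam (M+k)%nat * e (M + k)%nat).
    { replace (c0 * lam (M + k)%nat * e (M + k)%nat) with (c0 * lam (M+k)%nat * e (M+k)%nat) by ring.
      assert (0 <= c0 * lam (M+k)%nat) by nra. nra. }
    lra. }
  destruct (div_tail lam Hdiv ((B + C * B2) / (c0 * eps) + 1) M) as [k Hkk].
  specialize (Hk k).
  pose proof (ps_nonneg (fun j => lam j ^ 2) ltac:(intros; apply pow2_ge_0) M).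
  pose proof (HB2 (M + k)%nat). pose proof (Hs M). pose proof (Hs (M+k)%nat).
  assert (c0 * eps * (ps lam (M + k) - ps lam M) <= B + C * B2) by nra.
  assert (0 < c0 * eps) by nra.
  assert (HH : c0 * eps * ((B + C * B2) / (c0 * eps) + 1) < c0 * eps * (ps lam (M + k) - ps lam M))
    by (apply Rmult_lt_compat_l; auto).
  replace (c0 * eps * ((B + C * B2) / (c0 * eps) + 1)) with (B + C * B2 + c0 * eps) in HH by (field; lra).
  lra.
Qed.

Lemma seqB (C : R) (lam s : nat -> R) :
  0 <= C -> (forall j, 0 <= s j) -> (forall j, s (S j) <= s j + C * lam j ^ 2) ->
  ex_series (fun j => lam j ^ 2) ->
  (forall eps, 0 < eps -> forall M, exists j, (M <= j)%nat /\ s j < eps) ->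
  forall eps, 0 < eps -> exists J, forall j, (J <= j)%nat -> s j < eps.
Proof.
  intros HC Hs Hrec Hsq Hli eps Heps.
  destruct (series_tail _ Hsq ltac:(intros; apply pow2_ge_0) (eps / (2 * (C + 1))) ltac:(apply Rdiv_lt_0_compat; lra)) as [J HJ].
  destruct (Hli (eps/2) ltac:(lra) J) as [j0 [Hj0 Hs0]].
  exists j0. intros j Hj.
  assert (Hk : forall k, s (j0 + k)%nat <= s j0 + C * (ps (fun j => lam j ^ 2) (j0 + k) - ps (fun j => lam j ^ 2) j0)).
  { induction k. rewrite Nat.add_0_r. lra. rewrite Nat.add_succ_r. cbn [ps].
    specialize (Hrec (j0 + k)%nat). lra. }
  specialize (Hk (j - j0)%nat). replace (j0 + (j - j0))%nat with j in Hk by lia.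
  specialize (HJ j0 (j - j0)%nat Hj0). replace (j0 + (j - j0))%nat with j in HJ by lia.
  pose proof (ps_mono (fun j => lam j ^ 2) ltac:(intros; apply pow2_ge_0) j0 (j - j0)).
  replace (j0 + (j - j0))%nat with j in H by lia.
  assert (C * (ps (fun j1 : nat => lam j1 ^ 2) j - ps (fun j1 : nat => lam j1 ^ 2) j0) <= (C+1) * (eps / (2 * (C + 1)))).
  { apply Rmult_le_compat; lra. }
  replace ((C+1) * (eps / (2 * (C + 1)))) with (eps/2) in H0 by (field; lra).
  lra.
Qed.

Theorem mainTheorem5 (X : Type) (d : X -> X -> R) (kappa : R)
  (Hk : 0 < kappa)
  (Hcat : CAT_space kappa d)
  (Hcomp : m_compact d)
  (Hdiam : forall v w, d v w < PI / (2 * sqrt kappa))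
  (N : nat) (HN : (1 <= N)%nat)
  (f : nat -> X -> Rbar)
  (Hf : forall i, (1 <= i <= N)%nat ->
          ext_valued (f i) /\ proper_fun (f i) /\ convex_fun d (f i) /\ lsc d (f i))
  (Hmin : exists z, is_minimizer (sumF f N) z)
  (lam : nat -> R)
  (Hlam_pos : forall j, 0 < lam j)
  (Hlam_div : is_lim_seq (sum_n lam) p_infty)
  (Hlam_sq : ex_series (fun j => lam j ^ 2))
  (x : nat -> X)
  (Hx : forall j i, (1 <= i <= N)%nat ->
          is_resolvent kappa d (f i) (lam j) (x (j * N + i - 1)%nat) (x (j * N + i)%nat))
  (L : R) (HL : 0 < L)
  (HLip : forall j i, (1 <= i <= N)%nat ->
     Rbar_le (f i (x (j * N)%nat))
             (Rbar_plus (f i (x (j * N + i)%nat)) (Finite (L * d (x (j * N)%nat) (x (j * N + i)%nat)))) /\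
     Rbar_le (f i (x (j * N + i - 1)%nat))
             (Rbar_plus (f i (x (j * N + i)%nat))
                        (Finite (L * d (x (j * N + i - 1)%nat) (x (j * N + i)%nat))))) :
  exists p, converges_to d x p /\ is_minimizer (sumF f N) p.
Proof.
  pose proof Hcat as Hcat0. destruct Hcat0 as [Hm [Hgeo Hcmp]].
  pose proof Hm as [Hd0 [Hdeq [Hsym Htri]]].
  assert (Ha : 0 < sqrt kappa) by (apply sqrt_lt_R0; auto).
  assert (Ha2 : sqrt kappa * sqrt kappa = kappa) by (apply sqrt_sqrt; lra).
  pose proof (diam_bound d kappa Hk Hdiam) as Hdb.
  assert (Hpi := PI_RGT_0).
  assert (Had : forall v w, 0 <= sqrt kappa * d v w) by (intros; apply Rmult_le_pos; [lra|apply Hd0]).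
  destruct (unif_diam d (PI / (2 * sqrt kappa)) Hm Hcomp Hdiam) as [eta [Heta Heta']].
  set (del := cos (sqrt kappa * (PI / (2 * sqrt kappa) - eta))).
  assert (Hrho : eta <= PI / (2 * sqrt kappa)).
  { specialize (Heta' (x 0%nat) (x 0%nat)). assert (d (x 0%nat) (x 0%nat) = 0) by (apply Hdeq; auto). lra. }
  assert (Harg : sqrt kappa * (PI / (2 * sqrt kappa) - eta) = PI/2 - sqrt kappa * eta) by (field; lra).
  assert (Hdel : 0 < del).
  { unfold del. rewrite Harg.
    assert (sqrt kappa * eta <= PI/2).
    { apply Rmult_le_compat_l with (r := sqrt kappa) in Hrho; [|lra].
      replace (sqrt kappa * (PI / (2 * sqrt kappa))) with (PI/2) in Hrho by (field; lra). lra. }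
    assert (0 < sqrt kappa * eta) by nra.
    apply cos_gt_0; lra. }
  assert (Hcosd : forall v w, del <= cos (sqrt kappa * d v w)).
  { intros v w. unfold del. apply cos_decr_1.
    - apply Had.
    - pose proof (Hdb v w); lra.
    - apply Rmult_le_pos; lra.
    - rewrite Harg. assert (0 < sqrt kappa * eta) by nra. lra.
    - apply Rmult_le_compat_l; [lra| specialize (Heta' v w); lra]. }
  assert (Hdel1 : del <= 1) by apply COS_bound.
  assert (Hext : forall i y, (1 <= i <= N)%nat -> f i y <> m_infty) by (intros i y Hi; apply (Hf i Hi)).
  assert (HFr : forall i y, (1 <= i <= N)%nat -> f i y <> p_infty -> f i y = Finite (real (f i y))).
  { intros. apply fin_real; auto. }
  assert (Hfz : forall j i, (1 <= i <= N)%nat -> f i (x (j * N + i)%nat) <> p_infty).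
  { intros j i Hi. eapply res_fin. apply (Hf i Hi). apply Hx; auto. }
  assert (Hfx0 : forall j i, (1 <= i <= N)%nat -> f i (x (j * N)%nat) <> p_infty).
  { intros j i Hi. destruct (HLip j i Hi) as [H1 _]. rewrite (HFr i _ Hi (Hfz j i Hi)) in H1.
    intro E. rewrite E in H1. simpl in H1. exact H1. }
  assert (Hfxp : forall j i, (1 <= i <= N)%nat -> f i (x (j * N + i - 1)%nat) <> p_infty).
  { intros j i Hi. destruct (HLip j i Hi) as [_ H1]. rewrite (HFr i _ Hi (Hfz j i Hi)) in H1.
    intro E. rewrite E in H1. simpl in H1. exact H1. }
  assert (HsumF : forall y, (forall i, (1 <= i <= N)%nat -> f i y <> p_infty) -> sumF f N y = Finite (Fs f N y)).
  { intros y Hy. apply sumF_Fs. intros i Hi. apply HFr; auto. }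
  assert (Hminfin : forall p, is_minimizer (sumF f N) p -> forall i, (1 <= i <= N)%nat -> f i p <> p_infty).
  { intros p Hp. apply sumF_each_fin. intros; apply Hext; auto.
    specialize (Hp (x (0 * N)%nat)). rewrite (HsumF (x (0 * N)%nat)) in Hp by (intros; apply Hfx0; auto).
    intro E. rewrite E in Hp. simpl in Hp. exact Hp. }

  assert (Hpsi_lb : forall u v, d u v ^ 2 / 4 <= Psi kappa d u v).
  { intros u v. unfold Psi. set (ph := sqrt kappa * d v u).
    assert (Hph : 0 <= ph < PI/2) by (split; [apply Had| apply Hdb]).
    assert (Hc : 0 < cos ph <= 1) by (split; [apply cos_gt_0; lra| apply COS_bound]).
    assert (Hs := sin_ge_half ph ltac:(lra)).
    assert (Hs2 : (sin ph)^2 = 1 - (cos ph)^2) by (pose proof (sin2 ph); unfold Rsqr in *; nra).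
    assert (E : 1 / (kappa * cos ph) - cos ph / kappa = (sin ph)^2 / (kappa * cos ph)) by (rewrite Hs2; field; lra).
    rewrite E.
    assert (Hph2 : ph^2 = kappa * d u v ^2) by (unfold ph; rewrite (Hsym v u); transitivity ((sqrt kappa * sqrt kappa) * d u v ^2); [ring| rewrite Ha2; ring]).
    assert ((sin ph)^2 / kappa <= (sin ph)^2 / (kappa * cos ph)).
    { unfold Rdiv. apply Rmult_le_compat_l. nra. apply Rinv_le_contravar; nra. }
    assert (d u v ^2 / 4 <= (sin ph)^2 / kappa).
    { apply Rmult_le_reg_r with kappa; auto. replace (sin ph ^2 / kappa * kappa) with (sin ph ^2) by (field; lra).
      assert (0 <= ph / 2) by lra. assert ((ph/2)^2 <= sin ph ^2) by (apply pow_incr; lra). nra. }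
    lra. }
  assert (Hpsi0 : forall u, Psi kappa d u u = 0).
  { intro u. unfold Psi. rewrite (proj2 (Hdeq u u) eq_refl), Rmult_0_r, cos_0. field. lra. }
  assert (Hss : forall j i, (1 <= i <= N)%nat -> d (x (j * N + i - 1)%nat) (x (j * N + i)%nat) <= 4 * lam j * L).
  { intros j i Hi. pose proof (Hx j i Hi (x (j * N + i - 1)%nat)) as Hres.
    destruct (HLip j i Hi) as [_ Hl2].
    rewrite (HFr i _ Hi (Hfz j i Hi)), (HFr i _ Hi (Hfxp j i Hi)) in Hres, Hl2.
    simpl in Hres, Hl2. rewrite Hpsi0 in Hres.
    set (dd := d (x (j * N + i - 1)%nat) (x (j * N + i)%nat)) in *.
    pose proof (Hpsi_lb (x (j * N + i - 1)%nat) (x (j * N + i)%nat)) as Hpl. fold dd in Hpl.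
    pose proof (Hlam_pos j) as Hlj.
    assert (Hq : Psi kappa d (x (j * N + i - 1)%nat) (x (j * N + i)%nat) <= lam j * L * dd).
    { assert (Psi kappa d (x (j * N + i - 1)%nat) (x (j * N + i)%nat) / lam j <= L * dd) by (unfold Rdiv in *; lra).
      apply Rmult_le_reg_r with (/ lam j). apply Rinv_0_lt_compat; auto.
      replace (lam j * L * dd * / lam j) with (L * dd) by (field; lra). exact H. }
    assert (Hdd : 0 <= dd) by apply Hd0.
    destruct (Req_dec dd 0) as [E|E]. rewrite E. nra.
    assert (dd * dd <= 4 * lam j * L * dd) by nra.
    apply Rmult_le_reg_r with dd. lra. lra. }

  assert (Hchain : forall j i, (i <= N)%nat -> d (x (j * N)%nat) (x (j * N + i)%nat) <= 4 * INR i * lam j * L).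
  { intros j i. induction i as [|i IH]; intros Hi.
    - rewrite Nat.add_0_r, (proj2 (Hdeq _ _) eq_refl). simpl. lra.
    - pose proof (Htri (x (j * N)%nat) (x (j * N + i)%nat) (x (j * N + S i)%nat)).
      pose proof (Hss j (S i) ltac:(lia)) as H2. replace (j * N + S i - 1)%nat with (j * N + i)%nat in H2 by lia.
      specialize (IH ltac:(lia)). rewrite S_INR. lra. }
  set (C1 := 32 * kappa * L^2 / del^2 + 4 * kappa * INR N * L^2).
  assert (HC1 : 0 <= C1).
  { unfold C1. assert (0 <= 32 * kappa * L^2 / del^2).
    { unfold Rdiv. apply Rmult_le_pos. nra. left. apply Rinv_0_lt_compat. nra. }
    assert (0 <= INR N) by apply pos_INR. assert (0 <= 4 * kappa * INR N * L^2).
    { apply Rmult_le_pos. nra. nra. } lra. }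
  assert (Hstep : forall p, (forall i, (1 <= i <= N)%nat -> f i p <> p_infty) -> forall j i, (1 <= i <= N)%nat ->
    kappa * lam j * (real (f i (x (j * N + i)%nat)) - real (f i p)) <=
    (sqrt kappa * d p (x (j * N + i - 1)%nat))^2 - (sqrt kappa * d p (x (j * N + i)%nat))^2
      + 32 * kappa * L^2 / del^2 * lam j ^ 2).
  { intros p Hp j i Hi.
    assert (Hlast : 0 <= 32 * kappa * L^2 / del^2 * lam j ^ 2).
    { unfold Rdiv. apply Rmult_le_pos. apply Rmult_le_pos. nra. left. apply Rinv_0_lt_compat. nra. nra. }
    set (z := x (j * N + i)%nat) in *. set (xp := x (j * N + i - 1)%nat) in *.
    destruct (Req_dec (d z p) 0) as [E|E].
    - apply Hdeq in E. rewrite E. rewrite (proj2 (Hdeq p p) eq_refl). nra.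
    - assert (Hzp : 0 < d z p) by (pose proof (Hd0 z p); lra).
      destruct (Hf i Hi) as [_ [_ [Hconv _]]].
      pose proof (res_ineq d kappa Hk Hcat Hdiam (f i) Hconv (lam j) (Hlam_pos j) xp z p
          (real (f i z)) (real (f i p)) (HFr i _ Hi (Hfz j i Hi)) (HFr i _ Hi (Hp i Hi)) (Hx j i Hi) Hzp) as Hr.
      pose proof (step_real _ del (sqrt kappa * d z xp) (sqrt kappa * d z p) (sqrt kappa * d p xp)
          Hdel (Hcosd z xp) (Had z xp) ltac:(pose proof (Hdb z xp); lra)
          ltac:(apply Rmult_lt_0_compat; lra) ltac:(pose proof (Hdb z p); lra)
          (Had p xp) ltac:(pose proof (Hdb p xp); lra) Hr) as Hs.
      rewrite (Hsym z p) in Hs.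
      assert (Hzx : d z xp <= 4 * lam j * L) by (rewrite Hsym; apply Hss; auto).
      assert (Hzx0 : 0 <= d z xp) by apply Hd0.
      assert (Hsq : (sqrt kappa * d z xp)^2 <= kappa * (16 * L^2 * lam j^2)).
      { replace ((sqrt kappa * d z xp)^2) with ((sqrt kappa * sqrt kappa) * (d z xp)^2) by ring.
        rewrite Ha2. apply Rmult_le_compat_l. lra. nra. }
      assert (2 * (sqrt kappa * d z xp)^2 / del^2 <= 32 * kappa * L^2 / del^2 * lam j ^ 2).
      { replace (32 * kappa * L^2 / del^2 * lam j ^ 2) with (2 * (kappa * (16 * L^2 * lam j^2)) / del^2) by (field; lra).
        unfold Rdiv. apply Rmult_le_compat_r. left; apply Rinv_0_lt_compat; nra. lra. }
      lra. }
  assert (Hcyc : forall p, (forall i, (1 <= i <= N)%nat -> f i p <> p_infty) -> forall j m, (m <= N)%nat ->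
    kappa * lam j * (Fs f m (x (j * N)%nat) - Fs f m p) <=
    (sqrt kappa * d p (x (j * N)%nat))^2 - (sqrt kappa * d p (x (j * N + m)%nat))^2 + INR m * C1 * lam j ^ 2).
  { intros p Hp j m. induction m as [|m IH]; intros Hmn.
    - simpl. rewrite Nat.add_0_r. lra.
    - cbn [Fs]. specialize (IH ltac:(lia)).
      pose proof (Hstep p Hp j (S m) ltac:(lia)) as Hst.
      replace (j * N + S m - 1)%nat with (j * N + m)%nat in Hst by lia.
      destruct (HLip j (S m) ltac:(lia)) as [Hl1 _].
      rewrite (HFr (S m) _ ltac:(lia) (Hfz j (S m) ltac:(lia))), (HFr (S m) _ ltac:(lia) (Hfx0 j (S m) ltac:(lia))) in Hl1.
      simpl in Hl1.
      pose proof (Hchain j (S m) Hmn) as Hch.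
      assert (HNm : INR (S m) <= INR N) by (apply le_INR; lia).
      assert (Hdl : d (x (j * N)%nat) (x (j * N + S m)%nat) <= 4 * INR N * lam j * L).
      { pose proof (Hlam_pos j). assert (4 * INR (S m) * lam j * L <= 4 * INR N * lam j * L).
        { apply Rmult_le_compat_r. lra. apply Rmult_le_compat_r. lra. lra. } lra. }
      pose proof (Hlam_pos j) as Hlj.
      assert (Hk1 : kappa * lam j * (real (f (S m) (x (j * N)%nat)) - real (f (S m) (x (j * N + S m)%nat)))
                    <= kappa * lam j * (L * (4 * INR N * lam j * L))).
      { apply Rmult_le_compat_l. nra. assert (L * d (x (j * N)%nat) (x (j * N + S m)%nat) <= L * (4 * INR N * lam j * L)).
        apply Rmult_le_compat_l; lra. lra. }
      assert (E1 : kappa * lam j * (L * (4 * INR N * lam j * L)) = 4 * kappa * INR N * L^2 * lam j ^2) by ring.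
      rewrite S_INR. unfold C1.
      assert (E2 : (INR m + 1) * (32 * kappa * L ^ 2 / del ^ 2 + 4 * kappa * INR N * L ^ 2) * lam j ^ 2
         = INR m * (32 * kappa * L ^ 2 / del ^ 2 + 4 * kappa * INR N * L ^ 2) * lam j ^ 2
           + 32 * kappa * L ^ 2 / del ^ 2 * lam j ^ 2 + 4 * kappa * INR N * L ^ 2 * lam j ^ 2) by ring.
      rewrite E2. fold C1. fold C1 in IH. nra. }

  destruct Hmin as [p0 Hp0].
  pose proof (Hminfin p0 Hp0) as Hp0f.
  set (sF := fun p j => (sqrt kappa * d p (x (j * N)%nat))^2).
  assert (HxSj : forall j, x (j * N + N)%nat = x (S j * N)%nat) by (intro j; f_equal; simpl; lia).
  assert (Hrec : forall p, (forall i, (1 <= i <= N)%nat -> f i p <> p_infty) -> forall j,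
     kappa * lam j * (Fs f N (x (j * N)%nat) - Fs f N p) <= sF p j - sF p (S j) + INR N * C1 * lam j ^ 2).
  { intros p Hp j. pose proof (Hcyc p Hp j N (le_n _)) as H. unfold sF. rewrite <- HxSj. exact H. }
  assert (HsB : forall p j, 0 <= sF p j <= (PI/2)^2).
  { intros p j. unfold sF. pose proof (Had p (x (j * N)%nat)). pose proof (Hdb p (x (j * N)%nat)).
    split. apply pow2_ge_0. apply pow_incr. lra. }
  assert (Hge : forall p, is_minimizer (sumF f N) p -> forall j, Fs f N p <= Fs f N (x (j * N)%nat)).
  { intros p Hp j. pose proof (Hp (x (j * N)%nat)) as H.
    rewrite (HsumF p (Hminfin p Hp)), (HsumF (x (j * N)%nat) (fun i Hi => Hfx0 j i Hi)) in H. exact H. }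
  assert (HC : 0 <= INR N * C1) by (apply Rmult_le_pos; [apply pos_INR | auto]).
  pose proof (seqA kappa (INR N * C1) ((PI/2)^2) lam (sF p0) (fun j => Fs f N (x (j * N)%nat) - Fs f N p0)
     Hk HC (HsB p0) ltac:(intro j; pose proof (Hge p0 Hp0 j); simpl; lra) Hlam_pos (Hrec p0 Hp0f) Hlam_div Hlam_sq) as HA.
  assert (HA' : forall k : nat, exists j, (k <= j)%nat /\ Fs f N (x (j * N)%nat) - Fs f N p0 < 1 / (INR k + 1)).
  { intro k. apply HA. apply Rdiv_lt_0_compat. lra. pose proof (pos_INR k). lra. }
  set (jj := fun k => proj1_sig (constructive_indefinite_description _ (HA' k))).
  assert (Hjj : forall k, (k <= jj k)%nat /\ Fs f N (x (jj k * N)%nat) - Fs f N p0 < 1 / (INR k + 1)).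
  { intro k. unfold jj. destruct (constructive_indefinite_description _ (HA' k)) as [j Hj]. exact Hj. }
  set (u := fun k => x (jj k * N)%nat).
  destruct (cluster d Hm Hcomp u) as [q Hq].
  assert (Hqmin : is_minimizer (sumF f N) q).
  { intro y. eapply Rbar_le_trans; [| apply (Hp0 y)].
    apply NNPP. intro Hn. apply Rbar_not_le_lt in Hn.
    rewrite (HsumF p0 Hp0f) in Hn.
    destruct (Rbar_lt_gap _ _ Hn) as [M [HM1 HM2]].
    destruct (sumF_lsc d f N (fun i Hi => conj (proj1 (Hf i Hi)) (proj2 (proj2 (proj2 (Hf i Hi))))) q M HM2) as [e [He He']].
    destruct (archimed_cor1 (M - Fs f N p0) ltac:(lra)) as [K [HK1 HK2]].
    destruct (Hq e He K) as [k [Hk1 Hk2]].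
    specialize (He' (u k) ltac:(rewrite Hsym; exact Hk2)).
    unfold u in He'. rewrite (HsumF _ (fun i Hi => Hfx0 (jj k) i Hi)) in He'. simpl in He'.
    destruct (Hjj k) as [_ Hjk].
    assert (1 / (INR k + 1) <= / INR K).
    { assert (INR K <= INR k) by (apply le_INR; auto). assert (0 < INR K) by (apply lt_0_INR; auto).
      unfold Rdiv. rewrite Rmult_1_l. apply Rinv_le_contravar; lra. }
    lra. }
  pose proof (Hminfin q Hqmin) as Hqf.
  assert (HrecB : forall j, sF q (S j) <= sF q j + INR N * C1 * lam j ^ 2).
  { intro j. pose proof (Hrec q Hqf j). pose proof (Hge q Hqmin j). pose proof (Hlam_pos j).
    assert (0 <= kappa * lam j * (Fs f N (x (j * N)%nat) - Fs f N q)).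
    { apply Rmult_le_pos. apply Rmult_le_pos; lra. lra. } lra. }
  assert (Hli : forall eps, 0 < eps -> forall M, exists j, (M <= j)%nat /\ sF q j < eps).
  { intros eps Heps M.
    set (r := sqrt eps / (2 * sqrt kappa)).
    assert (Hr : 0 < r) by (unfold r; apply Rdiv_lt_0_compat; [apply sqrt_lt_R0; auto | lra]).
    destruct (Hq r Hr M) as [k [Hk1 Hk2]].
    exists (jj k). split. destruct (Hjj k); lia.
    unfold sF. unfold u in Hk2. rewrite Hsym in Hk2.
    assert (0 <= sqrt kappa * d q (x (jj k * N)%nat)) by apply Had.
    assert (sqrt kappa * d q (x (jj k * N)%nat) < sqrt kappa * r) by (apply Rmult_lt_compat_l; auto).
    assert ((sqrt kappa * r)^2 = eps / 4).
    { unfold r. replace (sqrt kappa * (sqrt eps / (2 * sqrt kappa))) with (sqrt eps / 2) by (field; lra).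
      replace ((sqrt eps / 2)^2) with ((sqrt eps * sqrt eps)/4) by field. rewrite sqrt_sqrt; lra. }
    nra. }
  pose proof (seqB (INR N * C1) lam (sF q) HC (fun j => proj1 (HsB q j)) HrecB Hlam_sq Hli) as HB.
  exists q. split; auto.
  intros e He.
  assert (HNr : 1 <= INR N) by (replace 1 with (INR 1) by reflexivity; apply le_INR; auto).
  destruct (HB ((sqrt kappa * e / 2)^2) ltac:(apply pow_lt; nra)) as [J1 HJ1].
  destruct (lam_to_0 lam Hlam_sq (fun j => Rlt_le _ _ (Hlam_pos j)) (e / (8 * INR N * L))
     ltac:(apply Rdiv_lt_0_compat; nra)) as [J2 HJ2].
  exists ((J1 + J2) * N)%nat. intros n Hn.
  set (j := (n / N)%nat). set (i := (n mod N)%nat).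
  assert (HNz : N <> 0%nat) by lia.
  assert (Hn_eq : n = (j * N + i)%nat).
  { pose proof (Nat.div_mod_eq n N) as E. fold j i in E. rewrite Nat.mul_comm in E. exact E. }
  assert (Hi : (i < N)%nat) by (apply Nat.mod_upper_bound; auto).
  assert (Hj : (J1 + J2 <= j)%nat).
  { unfold j; apply Nat.div_le_lower_bound; auto. rewrite Nat.mul_comm. exact Hn. }
  rewrite Hn_eq.
  pose proof (Htri (x (j * N + i)%nat) (x (j * N)%nat) q) as T.
  pose proof (Hchain j i ltac:(lia)) as Hc. rewrite Hsym in Hc.
  specialize (HJ1 j ltac:(lia)). specialize (HJ2 j ltac:(lia)).
  unfold sF in HJ1.
  assert (Hdq : d q (x (j * N)%nat) < e / 2).
  { pose proof (Had q (x (j * N)%nat)). pose proof (Hd0 q (x (j * N)%nat)).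
    assert (sqrt kappa * d q (x (j * N)%nat) < sqrt kappa * e / 2).
    { apply Rnot_le_lt. intro Hc'. assert ((sqrt kappa * e / 2)^2 <= (sqrt kappa * d q (x (j * N)%nat))^2).
      { apply pow_incr. split; [nra| exact Hc']. } lra. }
    nra. }
  rewrite (Hsym (x (j * N)%nat) q) in T.
  assert (HiN : INR i <= INR N) by (apply le_INR; lia).
  assert (4 * INR i * lam j * L <= 4 * INR N * lam j * L).
  { pose proof (Hlam_pos j). apply Rmult_le_compat_r. lra. apply Rmult_le_compat_r. lra. lra. }
  assert (4 * INR N * lam j * L < e / 2).
  { assert (HH : 4 * INR N * L * lam j < 4 * INR N * L * (e / (8 * INR N * L))).
    { apply Rmult_lt_compat_l. nra. exact HJ2. }
    replace (4 * INR N * L * (e / (8 * INR N * L))) with (e/2) in HH by (field; lra). lra. }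
  lra.
Qed.
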